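(* Let $p$ be a prime and let $a,b\in\mathbb{C}_p$ with $a\neq0$, $b\neq0$, $a\neq b$ and $|a|_p<|b|_p$. Let $P=-\frac1b$, $D=\mathbb{C}_p\setminus\{P\}$, $f(x)=\frac{ax^2}{bx+1}$ on $D$, and $x_1=0$ (a fixed point of $f$). For $n\geq 0$ put $r_n=\frac{|b|_p^{n-1}}{|a|_p^{n}}$, and put $l_0=0$ and $l_{n+1}=\frac{|a|_p^{n}}{|b|_p^{n+1}}$ for $n\ge 0$. Then $$D\setminus\Big(\bigcup_{i=1}^{\infty}S_{r_i}(x_1)\cup\bigcup_{j=0}^{\infty}S_{l_j}(P)\Big)\subseteq A(x_1).$$
   Context: $\mathbb{C}_p$ is the field of complex $p$-adic numbers with $p$-adic norm $|\cdot|_p$. For $c\in\mathbb{C}_p$ and $r\ge 0$, $S_r(c)=\{x\in\mathbb{C}_p:|x-c|_p=r\}$. For $y\in D$ write $y^{(n)}=f^n(y)$ (the $n$-th iterate, where defined, i.e. as long as no earlier iterate equals $P$). For a fixed point $x^{(0)}$ of $f$, its basin of attraction is $A(x^{(0)})=\{y: y^{(n)}\text{ is defined for all }n\text{ and }y^{(n)}\to x^{(0)}\text{ as }n\to\infty\}$. *)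

(* Defs.v *)
From HB Require Import structures.
From mathcomp Require Import all_boot all_order all_algebra.
From mathcomp Require Import reals.
Set Implicit Arguments. Unset Strict Implicit. Unset Printing Implicit Defensive.
Import Order.TTheory GRing.Theory Num.Theory.
Local Open Scope ring_scope.

Definition nonarch_abs (K : fieldType) (R : realType) (nv : K -> R) : Prop :=
  [/\ (forall x, 0 <= nv x),
      (forall x, nv x = 0 <-> x = 0),
      (forall x y, nv (x * y) = nv x * nv y) &
      (forall x y, nv (x + y) <= Num.max (nv x) (nv y))].

Definition nv_complete (K : fieldType) (R : realType) (nv : K -> R) : Prop :=
  forall u : nat -> K,
    (forall e : R, 0 < e -> exists N : nat, forall m n : nat,
        (N <= m)%N -> (N <= n)%N -> nv (u m - u n) < e) ->
    exists l : K, forall e : R, 0 < e -> exists N : nat, forall n : nat,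
        (N <= n)%N -> nv (u n - l) < e.

Definition extends_padic (p : nat) (K : fieldType) (R : realType)
    (nv : K -> R) : Prop :=
  forall n : nat, (0 < n)%N -> nv (n%:R) = ((p%:R : R) ^- (logn p n)).

(* K with nv plays the role of (C_p, |.|_p) *)
Definition Cp_like (p : nat) (K : closedFieldType) (R : realType)
    (nv : K -> R) : Prop :=
  [/\ nonarch_abs nv, nv_complete nv & extends_padic p nv].

Definition fmap (K : fieldType) (a b : K) (x : K) : K := a * x ^+ 2 / (b * x + 1).
Definition pole (K : fieldType) (b : K) : K := - (1 / b).

Definition sphere (K : fieldType) (R : realType) (nv : K -> R) (c : K) (r : R)
  : K -> Prop := fun x => nv (x - c) = r.

(* radii r_n = |b|^(n-1)/|a|^n (used for n >= 1), l_0 = 0, l_(n+1) = |a|^n/|b|^(n+1) *)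
Definition rrad (R : realType) (na nb : R) (n : nat) : R := nb ^+ n.-1 / na ^+ n.
Definition lrad (R : realType) (na nb : R) (n : nat) : R :=
  match n with 0 => 0 | m.+1 => na ^+ m / nb ^+ m.+1 end.

Definition basin (K : fieldType) (R : realType) (nv : K -> R)
    (f : K -> K) (P x0 : K) : K -> Prop :=
  fun y => (forall n : nat, iter n f y <> P) /\
    (forall e : R, 0 < e -> exists N : nat, forall n : nat,
        (N <= n)%N -> nv (iter n f y - x0) < e).

(* Main.v *)
Require Import Defs.
From HB Require Import structures.
From mathcomp Require Import all_boot all_order all_algebra.
From mathcomp Require Import reals.
From mathcomp Require Import ring lra.
Import Order.TTheory GRing.Theory Num.Theory.
Local Open Scope ring_scope.

Lemma geo_small (R : realType) (q e : R) : 0 <= q -> q < 1 -> 0 < e ->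
  exists N : nat, forall n, (N <= n)%N -> q ^+ n < e.
Proof.
move=> q0 q1 e0.
have bern : forall (h : R) n, 0 <= h -> 1 + n%:R * h <= (1 + h) ^+ n.
  move=> h n h0; elim: n => [|n IH]; first by rewrite expr0 mul0r addr0.
  rewrite exprS -natr1.
  have := exprn_ge0 n (addr_ge0 ler01 h0) => H.
  have hn : 0 <= n%:R :> R by [].
  nra.
have [->|qn0] := eqVneq q 0.
  by exists 1%N => n n1; rewrite expr0n; case: n n1 => [//|n] _ /=.
have qp : 0 < q by rewrite lt_def qn0 q0.
set h := q^-1 - 1.
have hp : 0 < h.
  by rewrite /h subr_gt0 invf_gt1.
have ei0 : 0 < e^-1 by rewrite invr_gt0.
have Hb := archi_boundP (ltW (divr_gt0 ei0 hp)).
set N := Num.bound _ in Hb.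
exists N => n Nn.
have Hq : q ^+ n <= q ^+ N by apply: ler_wiXn2l => //; exact: ltW.
apply: le_lt_trans Hq _.
have X1 := bern h N (ltW hp).
have E : 1 + h = q^-1 by rewrite /h addrC subrK.
rewrite E exprVn in X1.
have E2 : q ^+ N * (q ^+ N)^-1 = 1 by rewrite mulfV // expf_neq0.
have hN : e^-1 < N%:R * h.
  by move: Hb; rewrite ltr_pdivrMr.
have ei : e * e^-1 = 1 by rewrite mulfV // gt_eqF.
have qN0 := exprn_ge0 N q0.
set X := (q ^+ N)^-1 in E2 X1.
set Y := N%:R in hN X1.
set Z := e^-1 in hN ei ei0.
have XZ : Z < X by lra.
have X0 : 0 < X by lra.
have : q ^+ N * X < e * X by rewrite E2 -ei ltr_pM2l.
by rewrite ltr_pM2r.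
Qed.

Section NV.
Context {K : fieldType} {R : realType} {nv : K -> R} (hna : nonarch_abs nv).

Lemma nv_ge0 x : 0 <= nv x. Proof. by case: hna. Qed.
Lemma nv_eq0 x : nv x = 0 <-> x = 0. Proof. by case: hna. Qed.
Lemma nvM x y : nv (x * y) = nv x * nv y. Proof. by case: hna. Qed.
Lemma nvD x y : nv (x + y) <= Num.max (nv x) (nv y). Proof. by case: hna. Qed.

Lemma nv1 : nv 1 = 1.
Proof.
have h := nvM 1 1; rewrite mul1r in h.
have n0 : nv 1 != 0 by apply/eqP => /nv_eq0 /eqP; rewrite oner_eq0.
have : nv 1 * (nv 1 - 1) = 0 by rewrite mulrBr mulr1 -h subrr.
by move/eqP; rewrite mulf_eq0 (negbTE n0) /= subr_eq0 => /eqP.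
Qed.

Lemma nvN1 : nv (-1) = 1.
Proof.
have h := nvM (-1) (-1); rewrite mulrNN mulr1 nv1 in h.
have := nv_ge0 (-1); nra.
Qed.

Lemma nvN x : nv (- x) = nv x.
Proof. by rewrite -mulN1r nvM nvN1 mul1r. Qed.

Lemma nvV x : nv (x^-1) = (nv x)^-1.
Proof.
have [->|x0] := eqVneq x 0; first by rewrite invr0 (proj2 (nv_eq0 0) erefl) invr0.
have h := nvM x x^-1; rewrite mulfV // nv1 in h.
have n0 : nv x != 0 by apply/eqP => /nv_eq0 /eqP; rewrite (negbTE x0).
by apply: (mulfI n0); rewrite -h mulfV.
Qed.

Lemma nv_strict x y : nv x < nv y -> nv (x + y) = nv y.
Proof.
move=> lt; apply/eqP; rewrite eq_le; apply/andP; split.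
  have := nvD x y; case: (lerP (nv x) (nv y)) => // h.
  by have := lt_trans lt h; rewrite ltxx.
have := nvD (x + y) (- x).
have -> : x + y - x = y by rewrite addrAC subrr add0r.
rewrite nvN.
case: (lerP (nv (x + y)) (nv x)) => h H //.
by have := lt_le_trans lt H; rewrite ltxx.
Qed.

Lemma nv_f a b x : nv (fmap a b x) = nv a * nv x ^+ 2 / nv (b * x + 1).
Proof. by rewrite /fmap nvM nvV nvM expr2 nvM. Qed.

Lemma nv_pole b : nv (pole b) = (nv b)^-1.
Proof. by rewrite /pole nvN div1r nvV. Qed.

End NV.

Section Dyn.
Context {K : fieldType} {R : realType} {nv : K -> R} (hna : nonarch_abs nv).
Context (a b : K) (ha : a != 0) (hb : b != 0) (hlt : nv a < nv b).

Local Notation f := (fmap a b).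
Local Notation P := (pole b).

Lemma nvb0 : 0 < nv b.
Proof.
rewrite lt_def (nv_ge0 hna) // andbT; apply/eqP => /(nv_eq0 hna) /eqP.
by rewrite (negbTE hb).
Qed.

Lemma nva0 : 0 < nv a.
Proof.
rewrite lt_def (nv_ge0 hna) // andbT; apply/eqP => /(nv_eq0 hna) /eqP.
by rewrite (negbTE ha).
Qed.

Lemma q_ge0 : 0 <= nv a / nv b.
Proof. by rewrite divr_ge0 // ltW // ?nva0 ?nvb0. Qed.

Lemma q_lt1 : nv a / nv b < 1.
Proof. by rewrite ltr_pdivrMr ?nvb0 // mul1r. Qed.

Lemma f_big x : (nv b)^-1 < nv x -> nv (f x) = nv a / nv b * nv x.
Proof.
move=> h.
have b0 := nvb0.
have t0 : 0 < nv x by apply: lt_trans h; rewrite invr_gt0.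
have h1 : 1 < nv (b * x).
  rewrite (nvM hna) -(mulfV (lt0r_neq0 b0)) ltr_pM2l //.
have h2 : nv (b * x + 1) = nv (b * x).
  by rewrite addrC (nv_strict hna) // (nv1 hna).
rewrite (nv_f hna) h2 (nvM hna).
by field; rewrite ?lt0r_neq0.
Qed.

Lemma f_small x : nv x < (nv b)^-1 -> nv (f x) <= nv a / nv b * nv x.
Proof.
move=> h.
have b0 := nvb0.
have a0 := nva0.
have t0 : 0 <= nv x by apply: (nv_ge0 hna).
have h1 : nv (b * x) < 1.
  by rewrite (nvM hna) -(mulfV (lt0r_neq0 b0)) ltr_pM2l.
have h2 : nv (b * x + 1) = 1 by rewrite (nv_strict hna) // (nv1 hna).
rewrite (nv_f hna) h2 divr1.
set c := (nv b)^-1 in h *.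
set t := nv x in h t0 *.
rewrite mulrAC expr2 mulrA.
apply: ler_wpM2l; [exact: mulr_ge0 (ltW a0) t0 | exact: ltW].
Qed.

Lemma small_iter x : nv x < (nv b)^-1 ->
  forall n, nv (iter n f x) <= (nv a / nv b) ^+ n * nv x.
Proof.
move=> h; elim => [|n IH]; first by rewrite expr0 mul1r.
have qn1 : (nv a / nv b) ^+ n <= 1 by rewrite exprn_ile1 ?q_ge0 // ltW // q_lt1.
have hn : nv (iter n f x) < (nv b)^-1.
  apply: le_lt_trans IH _; apply: le_lt_trans h.
  by rewrite ler_piMl ?(nv_ge0 hna).
rewrite iterS; apply: le_trans (f_small _ hn) _.
rewrite exprS -[X in _ <= X]mulrA; apply: ler_wpM2l; [exact: q_ge0 | exact: IH].
Qed.

Lemma basin_small x : nv x < (nv b)^-1 -> basin nv f P 0 x.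
Proof.
move=> h; split.
  move=> n E.
  have := small_iter _ h n; rewrite E (nv_pole hna) => H.
  have qn1 : (nv a / nv b) ^+ n <= 1 by rewrite exprn_ile1 ?q_ge0 // ltW // q_lt1.
  have : (nv a / nv b) ^+ n * nv x <= nv x by rewrite ler_piMl ?(nv_ge0 hna).
  move=> H2; have := le_trans H H2; rewrite leNgt h //.
move=> e e0.
have t0 : 0 < nv x + 1 by have := nv_ge0 hna x; lra.
have [N HN] := @geo_small R (nv a / nv b) (e / (nv x + 1)) q_ge0 q_lt1 (divr_gt0 e0 t0).
exists N => n Nn; rewrite subr0.
apply: le_lt_trans (small_iter _ h n) _.
have := HN n Nn; rewrite ltr_pdivlMr // => H.
have := exprn_ge0 n q_ge0; have := nv_ge0 hna x; nra.
Qed.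

Lemma basin_step x : basin nv f P 0 (f x) -> x <> P -> basin nv f P 0 x.
Proof.
move=> [h1 h2] xP; split.
  by case => [//|n]; rewrite iterSr.
move=> e e0; have [N HN] := h2 e e0.
exists N.+1 => [[//|n]] Nn; rewrite iterSr; exact: HN.
Qed.

Lemma basin_shift m : forall x, basin nv f P 0 (iter m f x) ->
  (forall j, (j < m)%N -> iter j f x <> P) -> basin nv f P 0 x.
Proof.
elim: m => [//|m IH] x h hj.
apply: basin_step; last exact: (hj 0%N).
apply: IH; first by rewrite -iterSr.
by move=> j jm; rewrite -iterSr; apply: hj.
Qed.


Lemma rk_ne (t : R) m : (nv a / nv b) ^+ m.+1 * t = (nv b)^-1 ->
  t = rrad (nv a) (nv b) m.+1.
Proof.
move=> H.
have a0 := lt0r_neq0 nva0; have b0 := lt0r_neq0 nvb0.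
have am : nv a ^+ m != 0 by rewrite expf_neq0.
have bm : nv b ^+ m != 0 by rewrite expf_neq0.
rewrite /rrad /=.
have -> : t = (nv a / nv b) ^+ m.+1 * t * (nv b ^+ m / nv a ^+ m.+1) * nv b.
  rewrite exprS expr_div_n exprS; field.
  by rewrite am bm a0 b0.
rewrite H exprS; field.
by rewrite am a0 b0.
Qed.

Lemma basin_off x : nv x != (nv b)^-1 ->
  (forall i, (1 <= i)%N -> nv x <> rrad (nv a) (nv b) i) -> basin nv f P 0 x.
Proof.
move=> hc hr.
case: (ltgtP (nv x) (nv b)^-1) => [h|h|h]; first exact: basin_small.
  2: by rewrite h eqxx in hc.
set t := nv x in h hc hr.
have c0 : 0 < (nv b)^-1 by rewrite invr_gt0 nvb0.
have t0 : 0 < t by apply: lt_trans h.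
have [N HN] := @geo_small R (nv a / nv b) ((nv b)^-1 / t) q_ge0 q_lt1 (divr_gt0 c0 t0).
have hex : exists n, (nv a / nv b) ^+ n * t < (nv b)^-1.
  by exists N; have := HN N (leqnn N); rewrite ltr_pdivlMr.
case: (ex_minnP hex) => n Hn Hmin.
have gtk : forall k, (k < n)%N -> (nv b)^-1 < (nv a / nv b) ^+ k * t.
  move=> k kn.
  have ge : (nv b)^-1 <= (nv a / nv b) ^+ k * t.
    rewrite leNgt; apply/negP => H; have := Hmin k H.
    by rewrite leqNgt kn.
  rewrite lt_def ge andbT; apply/negP => /eqP E.
  case: k kn E ge => [|m] kn E ge.
    by move: E; rewrite expr0 mul1r => E; rewrite E ltxx in h.
  by apply: (hr m.+1 erefl); apply: rk_ne.
have key : forall k, (k <= n)%N -> nv (iter k f x) = (nv a / nv b) ^+ k * t.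
  elim => [|k IH] kn; first by rewrite expr0 mul1r.
  have IH' := IH (ltnW kn).
  rewrite iterS (f_big _ (_ : _ < _)).
    by rewrite IH' exprS mulrA.
  by rewrite IH'; apply: gtk.
apply: (basin_shift n).
  by apply: basin_small; rewrite key.
move=> j jn E.
have := gtk j jn; rewrite -(key j (ltnW jn)) E (nv_pole hna) ltxx.
by [].
Qed.

End Dyn.

Theorem theorem3p3 (p : nat) (K : closedFieldType) (R : realType) (nv : K -> R)
  (hp : prime p) (hK : Cp_like p nv)
  (a b : K) (ha : a != 0) (hb : b != 0) (hab : a != b) (hlt : nv a < nv b)
  (y : K)
  (hyD : y <> pole b)
  (hr : forall i : nat, (1 <= i)%N -> ~ sphere nv 0 (rrad (nv a) (nv b) i) y)
  (hl : forall j : nat, ~ sphere nv (pole b) (lrad (nv a) (nv b) j) y) :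
  basin nv (fmap a b) (pole b) 0 y.
Proof.
case: hK => hna _ _.
have hr' : forall i, (1 <= i)%N -> nv y <> rrad (nv a) (nv b) i.
  by move=> i hi E; apply: (hr i hi); rewrite /sphere subr0.
have [hc|hc] := eqVneq (nv y) (nv b)^-1; last exact: (basin_off hna a b ha hb hlt y hc hr').
apply: basin_step; last exact: hyD.
have a0 := lt0r_neq0 (nva0 hna a ha); have b0 := lt0r_neq0 (nvb0 hna b hb).
set s := nv (y - pole b).
have s0 : s != 0.
  by apply/eqP => /(nv_eq0 hna) /eqP; rewrite subr_eq0 => /eqP.
have E1 : b * y + 1 = b * (y - pole b).
  by rewrite /pole; field.
have Eu : nv (fmap a b y) = nv a * (nv b)^-1 ^+ 2 / (nv b * s).
  by rewrite (nv_f hna) E1 (nvM hna) hc.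
apply: (basin_off hna a b ha hb hlt).
  rewrite Eu; apply/eqP => H.
  apply: (hl 2%N); rewrite /sphere /= -/s.
  have -> : s = nv a * (nv b)^-1 ^+ 2 / (nv b * (nv a * (nv b)^-1 ^+ 2 / (nv b * s))).
    by field; rewrite a0 b0 s0.
  by rewrite H; field.
move=> [//|m] _; rewrite Eu /rrad /= => H.
apply: (hl m.+3); rewrite /sphere /= -/s.
have am : nv a ^+ m != 0 by rewrite expf_neq0.
have bm : nv b ^+ m != 0 by rewrite expf_neq0.
have -> : s = nv a * (nv b)^-1 ^+ 2 / (nv b * (nv a * (nv b)^-1 ^+ 2 / (nv b * s))).
  by field; rewrite a0 b0 s0.
rewrite H !exprS; field.
by rewrite am bm a0 b0.
Qed.
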